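(* Let $\mathbf P=(P,\leq,{}',0,1)$ be an atomic pseudo-orthomodular poset of finite rank. Then its Dedekind-MacNeille completion $\mathrm{DM}(\mathbf P)$ is orthomodular.
   Context: For $M\subseteq P$, $U(M)$, $L(M)$ are the sets of upper and lower bounds; $U(a,b)=U(\{a,b\})$ etc. A poset with complementation is a bounded poset with antitone involution $'$ ($x\le y\Rightarrow y'\le x'$, $x''=x$) with $L(x,x')=\{0\}$, $U(x,x')=\{1\}$; it is pseudo-orthomodular if $L(U(L(x,y),y'),y)=L(x,y)$ for all $x,y$. A subset $S$ is orthogonal if $s\le t'$ for all distinct $s,t\in S$; $\mathbf P$ has finite rank if every orthogonal subset is finite. An atom is a minimal element of $P\setminus\{0\}$; $\mathbf P$ is atomic if every $b>0$ lies above some atom. The Dedekind-MacNeille completion $\mathrm{DM}(\mathbf P)$ is the complete lattice of subsets $B\subseteq P$ with $L(U(B))=B$ under inclusion, with antitone involution $X'=L(\{u'\mid u\in X\})$; a lattice with complementation is orthomodular if $x\vee y=((x\vee y)\wedge y')\vee y$ for all $x,y$. *)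

(* Defs.v *)
From Stdlib Require Import List.

Section Defs.
Variable T : Type.
Variable le : T -> T -> Prop.

Definition seteq (A B : T -> Prop) : Prop := forall z, A z <-> B z.
Definition subset (A B : T -> Prop) : Prop := forall z, A z -> B z.
Definition setU (A B : T -> Prop) : T -> Prop := fun z => A z \/ B z.
Definition setI (A B : T -> Prop) : T -> Prop := fun z => A z /\ B z.
Definition pair (x y : T) : T -> Prop := fun z => z = x \/ z = y.
Definition single (x : T) : T -> Prop := fun z => z = x.

Definition Ub (M : T -> Prop) : T -> Prop := fun u => forall m, M m -> le m u.
Definition Lb (M : T -> Prop) : T -> Prop := fun l => forall m, M m -> le l m.

Variables (comp : T -> T) (zero one : T).

Definition poset_with_complementation : Prop :=
  (forall x, le x x) /\
  (forall x y, le x y -> le y x -> x = y) /\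
  (forall x y z, le x y -> le y z -> le x z) /\
  (forall x, le zero x /\ le x one) /\
  (forall x y, le x y -> le (comp y) (comp x)) /\
  (forall x, comp (comp x) = x) /\
  (forall x, seteq (Lb (pair x (comp x))) (single zero)) /\
  (forall x, seteq (Ub (pair x (comp x))) (single one)).

Definition pseudo_orthomodular : Prop :=
  forall x y,
    seteq (Lb (setU (Ub (setU (Lb (pair x y)) (single (comp y)))) (single y)))
          (Lb (pair x y)).

Definition orthogonal (S : T -> Prop) : Prop :=
  forall s t, S s -> S t -> s <> t -> le s (comp t).

Definition finite_set (S : T -> Prop) : Prop :=
  exists l : list T, forall s, S s -> In s l.

Definition finite_rank : Prop :=
  forall S, orthogonal S -> finite_set S.

Definition atom (a : T) : Prop :=
  a <> zero /\ forall b, b <> zero -> le b a -> b = a.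

Definition atomic : Prop :=
  forall b, b <> zero -> exists a, atom a /\ le a b.

(* Dedekind-MacNeille completion: closed subsets B with L(U(B)) = B,
   ordered by inclusion; meet = intersection, join = L(U(X ∪ Y)),
   complement X' = L({u' | u in X}), bottom = L(U(∅)) = L(P), top = P. *)
Definition DM_elem (B : T -> Prop) : Prop := seteq (Lb (Ub B)) B.
Definition DM_meet (X Y : T -> Prop) : T -> Prop := setI X Y.
Definition DM_join (X Y : T -> Prop) : T -> Prop := Lb (Ub (setU X Y)).
Definition DM_comp (X : T -> Prop) : T -> Prop :=
  Lb (fun v => exists u, X u /\ v = comp u).
Definition DM_bot : T -> Prop := Lb (Ub (fun _ => False)).
Definition DM_top : T -> Prop := fun _ => True.

Definition DM_orthomodular : Prop :=
  (forall X, DM_elem X -> DM_elem (DM_comp X)) /\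
  (forall X Y, DM_elem X -> DM_elem Y -> subset X Y ->
      subset (DM_comp Y) (DM_comp X)) /\
  (forall X, DM_elem X -> seteq (DM_comp (DM_comp X)) X) /\
  (forall X, DM_elem X -> seteq (DM_meet X (DM_comp X)) DM_bot) /\
  (forall X, DM_elem X -> seteq (DM_join X (DM_comp X)) DM_top) /\
  (forall X Y, DM_elem X -> DM_elem Y ->
      seteq (DM_join X Y) (DM_join (DM_meet (DM_join X Y) (DM_comp Y)) Y)).

End Defs.

(* Main.v *)
Require Import Defs.
From Stdlib Require Import List Classical ClassicalEpsilon Lia PeanoNat Arith.

Definition orthl {T : Type} (le : T -> T -> Prop) (comp : T -> T) (M : list T) : Prop :=
  forall s t, In s M -> In t M -> s <> t -> le s (comp t).

Lemma LUL_closed (T : Type) (le : T -> T -> Prop) (S : T -> Prop) :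
  DM_elem T le (Lb T le S).
Proof.
  intro z; split.
  - intros H m Hm. apply H. intros l Hl. apply Hl, Hm.
  - intros H u Hu. apply Hu, H.
Qed.

Lemma LU_closed (T : Type) (le : T -> T -> Prop) (S : T -> Prop) :
  DM_elem T le (Lb T le (Ub T le S)).
Proof. apply LUL_closed. Qed.

Lemma lemG (T : Type) (le : T -> T -> Prop) (comp : T -> T)
  (PO : pseudo_orthomodular T le comp) (X : T -> Prop) (HX : DM_elem T le X) (y z : T) :
  le z y ->
  (forall t, (forall w, (X w /\ le w y) -> le w t) -> le (comp y) t -> le z t) ->
  X z.
Proof.
  intros Hzy Ht. apply HX. intros v Hv.
  destruct (PO v y z) as [H1 _].
  assert (Hz : Lb T le (pair T v y) z).
  { apply H1. intros m [Hm | Hm].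
    - apply Ht.
      + intros w [Xw wy]. apply Hm. left. intros q [-> | ->]; [apply Hv; exact Xw | exact wy].
      + apply Hm. right. reflexivity.
    - unfold single in Hm. subst m. exact Hzy. }
  apply Hz. left. reflexivity.
Qed.

Lemma lemH (T : Type) (le : T -> T -> Prop) (comp : T -> T)
  (refl : forall x, le x x)
  (anti : forall x y, le x y -> le (comp y) (comp x))
  (invol : forall x, comp (comp x) = x)
  (PO : pseudo_orthomodular T le comp) (Z : T -> Prop) (HZ : DM_elem T le Z) (p : T) :
  Z p -> forall z w, Z z ->
  (forall y, (le y p \/ (Z y /\ le y (comp p))) -> le y w) -> le z w.
Proof.
  intros Zp z w Zz Hw.
  assert (Hpw : le p w) by (apply Hw; left; apply refl).
  assert (HX : DM_comp T le comp Z (comp w)).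
  { apply (lemG T le comp PO (DM_comp T le comp Z) (LUL_closed _ _ _) (comp p)).
    - apply anti, Hpw.
    - intros t Ht Hpt. rewrite invol in Hpt.
      assert (le (comp t) w).
      { apply Hw. right. split.
        - apply HZ. intros u Hu.
          assert (le (comp u) t).
          { apply Ht. split.
            - intros m [u0 [Zu0 ->]]. apply anti, Hu, Zu0.
            - apply anti, Hu, Zp. }
          rewrite <- (invol u). apply anti. assumption.
        - apply anti, Hpt. }
      rewrite <- (invol t). apply anti. assumption. }
  assert (le (comp w) (comp z)) by (apply HX; exists z; split; auto).
  rewrite <- (invol z), <- (invol w). apply anti. assumption.
Qed.

Lemma atom_nso (T : Type) (le : T -> T -> Prop) (comp : T -> T) (zero : T)
  (refl : forall x, le x x)
  (compL : forall x, seteq T (Lb T le (pair T x (comp x))) (single T zero)) (e : T) :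
  atom T le zero e -> le e (comp e) -> False.
Proof.
  intros [Hne _] H. apply Hne. apply (compL e e). intros m [-> | ->]; auto.
Qed.

Lemma key (T : Type) (le : T -> T -> Prop) (comp : T -> T) (zero : T)
  (refl : forall x, le x x)
  (trans : forall x y z, le x y -> le y z -> le x z)
  (anti : forall x y, le x y -> le (comp y) (comp x))
  (invol : forall x, comp (comp x) = x)
  (zle : forall x, le zero x)
  (PO : pseudo_orthomodular T le comp) (AT : atomic T le zero) :
  forall M A, DM_elem T le A -> (forall t, In t M -> atom T le zero t /\ A t) ->
  orthl le comp M ->
  (forall e, atom T le zero e -> A e -> (forall t, In t M -> le e (comp t)) -> False) ->
  forall x, A x -> Lb T le (Ub T le (fun t => In t M)) x.
Proof.
  induction M as [| m M0 IH]; intros A HA Hat Hor Hmax x Ax.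
  - destruct (classic (x = zero)) as [-> | Hne].
    + intros m _. apply zle.
    + destruct (AT x Hne) as [a [Ha Hax]]. exfalso.
      apply (Hmax a Ha).
      * apply HA. intros u Hu. apply trans with x; auto.
      * intros t [].
  - destruct (classic (In m M0)) as [Hin | Hnin].
    + assert (H := IH A HA (fun t Ht => Hat t (or_intror Ht))
                 (fun s t Hs Ht => Hor s t (or_intror Hs) (or_intror Ht))).
      assert (H2 : forall x, A x -> Lb T le (Ub T le (fun t => In t M0)) x).
      { apply H. intros e He Ae Ht. apply (Hmax e He Ae).
        intros t [<- | Ht']; auto. }
      intros u Hu. apply (H2 x Ax). intros y Hy. apply Hu. right; exact Hy.
    + set (A1 := fun y => A y /\ le y (comp m)).
      assert (HA1 : DM_elem T le A1).
      { intro z; split.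
        - intros H. split.
          + apply HA. intros u Hu. apply H. intros y [Ay _]. apply Hu, Ay.
          + apply H. intros y [_ h]. exact h.
        - intros H u Hu. apply Hu, H. }
      assert (H2 : forall y, A1 y -> Lb T le (Ub T le (fun t => In t M0)) y).
      { apply IH.
        - exact HA1.
        - intros t Ht. destruct (Hat t (or_intror Ht)) as [a1 a2]. split; [exact a1|].
          split; [exact a2|]. apply Hor; [right; exact Ht | left; reflexivity |].
          intros ->. apply Hnin, Ht.
        - intros s t Hs Ht. apply Hor; right; assumption.
        - intros e He [Ae Aem] Ht. apply (Hmax e He Ae).
          intros t [<- | Ht']; auto. }
      intros w Hw.
      assert (Am : A m) by (apply (Hat m); left; reflexivity).
      apply (lemH T le comp refl anti invol PO A HA m Am x w Ax).
      intros y [Hy | Hy].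
      * apply trans with m; auto. apply Hw. left; reflexivity.
      * apply (H2 y Hy). intros t Ht. apply Hw. right; exact Ht.
Qed.

Fixpoint iter_list {T : Type} (f : list T -> T) (n : nat) : list T :=
  match n with
  | 0 => nil
  | S k => f (iter_list f k) :: iter_list f k
  end.

Lemma iter_list_incl {T : Type} (f : list T -> T) :
  forall d n, incl (iter_list f n) (iter_list f (d + n)).
Proof.
  induction d; intros n; simpl.
  - apply incl_refl.
  - apply incl_tl. apply IHd.
Qed.

Lemma iter_list_length {T : Type} (f : list T -> T) n : length (iter_list f n) = n.
Proof. induction n; simpl; auto. Qed.

Lemma exists_max (T : Type) (le : T -> T -> Prop) (comp : T -> T) (zero : T)
  (refl : forall x, le x x)
  (anti : forall x y, le x y -> le (comp y) (comp x))
  (invol : forall x, comp (comp x) = x)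
  (compL : forall x, seteq T (Lb T le (pair T x (comp x))) (single T zero))
  (FR : finite_rank T le comp) (A : T -> Prop) :
  exists M, (forall t, In t M -> atom T le zero t /\ A t) /\ orthl le comp M /\
    (forall e, atom T le zero e -> A e -> (forall t, In t M -> le e (comp t)) -> False).
Proof.
  apply NNPP; intro Hno.
  set (good := fun M => (forall t, In t M -> atom T le zero t /\ A t) /\ orthl le comp M).
  set (P := fun M e => atom T le zero e /\ A e /\ forall t, In t M -> le e (comp t)).
  assert (step : forall M, good M -> exists e, P M e).
  { intros M [H1 H2]. apply NNPP; intro Hne. apply Hno. exists M.
    split; [|split]; auto. intros e Ae Ae' He. apply Hne. exists e. split; auto. }
  set (pick := fun M => epsilon (inhabits zero) (P M)).
  set (lst := iter_list pick).
  assert (Hgood : forall n, good (lst n) /\ NoDup (lst n)).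
  { induction n as [| n [[IH1 IH2] IH3]].
    - split; [split|]; simpl.
      + intros t [].
      + intros s t [].
      + constructor.
    - assert (Hp : P (lst n) (pick (lst n))).
      { apply epsilon_spec. apply step. split; auto. }
      destruct Hp as [Pa [PA Po]].
      change (lst (S n)) with (pick (lst n) :: lst n).
      split; [split|].
      + intros t [<- | Ht]; auto.
      + intros s t [<- | Hs] [<- | Ht] Hst.
        * exfalso; auto.
        * apply Po, Ht.
        * rewrite <- (invol s). apply anti. apply Po, Hs.
        * apply IH2; auto.
      + constructor; auto. intro Hin. apply (atom_nso T le comp zero refl compL _ Pa).
        apply Po, Hin. }
  set (S := fun x => exists n, In x (lst n)).
  assert (HS : orthogonal T le comp S).
  { intros s t [n1 H1] [n2 H2] Hst.
    assert (H1' : In s (lst (n2 + n1))) by (apply iter_list_incl; exact H1).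
    assert (H2' : In t (lst (n2 + n1))).
    { rewrite Nat.add_comm. apply iter_list_incl; exact H2. }
    destruct (Hgood (n2 + n1)) as [[_ Ho] _]. apply Ho; auto. }
  destruct (FR S HS) as [l Hl].
  destruct (Hgood (Datatypes.S (length l))) as [_ Hnd].
  assert (Hinc : incl (lst (Datatypes.S (length l))) l).
  { intros x Hx. apply Hl. exists (Datatypes.S (length l)). exact Hx. }
  pose proof (NoDup_incl_length Hnd Hinc) as Hlen.
  unfold lst in Hlen. rewrite iter_list_length in Hlen. lia.
Qed.

Theorem theorem7 (T : Type) (le : T -> T -> Prop) (comp : T -> T) (zero one : T) :
  poset_with_complementation T le comp zero one ->
  pseudo_orthomodular T le comp ->
  atomic T le zero ->
  finite_rank T le comp ->
  DM_orthomodular T le comp.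
Proof.
  intros [refl [asym [trans [bnd [anti [invol [compL compU]]]]]]] PO AT FR.
  assert (zle : forall x, le zero x) by (intro x; apply bnd).
  assert (le1 : forall x, le x one) by (intro x; apply bnd).
  split; [| split; [| split; [| split; [| split]]]].
  - intros X _. apply LUL_closed.
  - intros X Y _ _ Hsub z Hz m [u [Xu ->]]. apply Hz. exists u; split; auto.
  - intros X HX z; split.
    + intros H. apply HX. intros u Hu. rewrite <- (invol u). apply H.
      exists (comp u); split; auto.
      intros m [x [Xx ->]]. apply anti, Hu, Xx.
    + intros Xz m [v [Hv ->]].
      assert (le v (comp z)) by (apply Hv; exists z; split; auto).
      rewrite <- (invol z). apply anti. assumption.
  - intros X HX z; split.
    + intros [Xz Hz'].
      assert (le z (comp z)) by (apply Hz'; exists z; split; auto).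
      assert (z = zero) by (apply (compL z z); intros m [-> | ->]; auto).
      subst z. intros m _. apply zle.
    + intros H.
      assert (le z zero) by (apply H; intros m0 []).
      assert (z = zero) by (apply asym; auto). subst z.
      split.
      * apply HX. intros u _. apply zle.
      * intros m _. apply zle.
  - intros X HX z; split; [intros; exact I|].
    intros _ u Hu.
    assert (u = one).
    { apply (compU u u). intros m [-> | ->].
      - apply refl.
      - apply Hu. right. intros m [x [Xx ->]]. apply anti, Hu. left; exact Xx. }
    subst u. apply le1.
  - intros X Y HX HY.
    set (J := DM_join T le X Y).
    set (K := DM_join T le (DM_meet T (DM_join T le X Y) (DM_comp T le comp Y)) Y).
    assert (HJ : DM_elem T le J) by apply LU_closed.
    assert (HK : DM_elem T le K) by apply LU_closed.
    assert (YK : forall y, Y y -> K y) by (intros y Yy u Hu; apply Hu; right; exact Yy).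
    assert (KJ : forall x, K x -> J x).
    { intros x Hx u Hu. apply Hx. intros s [[Js _] | Ys].
      - apply Js, Hu.
      - apply Hu. right; exact Ys. }
    intro z; split; [| apply KJ].
    intros Jz.
    destruct (exists_max T le comp zero refl anti invol compL FR K) as [M [Hat [Hor Hmax]]].
    assert (KM := key T le comp zero refl trans anti invol zle PO AT M K HK Hat Hor Hmax).
    assert (Hmax' : forall e, atom T le zero e -> J e -> (forall t, In t M -> le e (comp t)) -> False).
    { intros e He Je Ht.
      assert (Ke : K e).
      { intros u Hu. apply Hu. left. split; [exact Je|].
        intros m [y [Yy ->]].
        assert (le y (comp e)).
        { apply (KM y (YK y Yy)). intros t Ht'. rewrite <- (invol t). apply anti, Ht, Ht'. }
        rewrite <- (invol e). apply anti. assumption. }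
      apply (atom_nso T le comp zero refl compL e He).
      apply (KM e Ke). intros t Ht'. rewrite <- (invol t). apply anti, Ht, Ht'. }
    assert (JM := key T le comp zero refl trans anti invol zle PO AT M J HJ
                   (fun t Ht => let (a, b) := Hat t Ht in conj a (KJ t b)) Hor Hmax').
    apply HK. intros u Hu. apply (JM z Jz). intros t Ht. apply Hu. apply (proj2 (Hat t Ht)).
Qed.
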